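(* Let $P:\mathcal C^{op}\to\mathbf{InfSL}$ be an arithmetic doctrine with comprehensive diagonals. Then $P$ satisfies the Countable Axiom of Choice $(\mathrm{AC}_{\mathbf N})$ if and only if its elementary quotient completion $\overline P$ satisfies $(\mathrm{AC}_{\mathbf N})$.
   Context: A doctrine $P$ is arithmetic if it is a weak hyperdoctrine (elementary doctrine over a weakly cartesian closed base, with Heyting fibres, Heyting reindexing, and left and right adjoints to reindexing along product projections satisfying Beck–Chevalley) and $\mathcal C$ has a parameterized natural number object $(\mathbf N,0,s)$ satisfying induction in $P$ (for $\phi\in P(A\times\mathbf N)$, $a\vdash\phi(a,0)$ and $\phi(a,m)\vdash\phi(a,s(m))$ imply $a,n\vdash\phi(a,n)$). Comprehensive diagonals: $f,g:X\to Y$ are equal whenever $\top\vdash f(x)=_Yg(x)$. The Axiom of Choice holds on $A$ if for every $B$ and $R\in P(A\times B)$: $\forall a.\exists b.R(a,b)\vdash\exists f:W.\forall a.R(a,ev(f,a))$ for a weak evaluation $ev:W\times A\to B$; $(\mathrm{AC}_{\mathbf N})$ is the Axiom of Choice on the natural number object (in $\mathcal Q_P$ this is $(\mathbf N,\delta_{\mathbf N})$). The elementary quotient completion $\overline P:\mathcal Q_P^{op}\to\mathbf{InfSL}$ has objects $(A,\rho)$ with $\rho$ a $P$-equivalence relation, arrows equivalence classes of relation-preserving arrows of $\mathcal C$, and $\overline P(A,\rho)=\{\alpha\in P(A)\mid\alpha(a)\wedge\rho(a,a')\vdash\alpha(a')\}$. *)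

(* Defs.v *)
Set Implicit Arguments.
Unset Strict Implicit.

Record CCat := {
  ob : Type;
  hom : ob -> ob -> Type;
  comp : forall A B D : ob, hom B D -> hom A B -> hom A D;
  idm : forall A : ob, hom A A;
  comp_assoc : forall A B D E (h : hom D E) (g : hom B D) (f : hom A B),
      comp h (comp g f) = comp (comp h g) f;
  comp_idl : forall A B (f : hom A B), comp (idm B) f = f;
  comp_idr : forall A B (f : hom A B), comp f (idm A) = f;
  term : ob;
  bang : forall A : ob, hom A term;
  bang_uniq : forall A (f : hom A term), f = bang A;
  prod : ob -> ob -> ob;
  pr1 : forall A B : ob, hom (prod A B) A;
  pr2 : forall A B : ob, hom (prod A B) B;
  pair : forall X A B : ob, hom X A -> hom X B -> hom X (prod A B);
  pair_pr1 : forall X A B (f : hom X A) (g : hom X B), comp (pr1 A B) (pair f g) = f;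
  pair_pr2 : forall X A B (f : hom X A) (g : hom X B), comp (pr2 A B) (pair f g) = g;
  pair_uniq : forall X A B (h : hom X (prod A B)),
      h = pair (comp (pr1 A B) h) (comp (pr2 A B) h)
}.

Arguments hom : clear implicits.
Arguments comp {c A B D} _ _.
Arguments idm {c} A.
Arguments term {c}.
Arguments bang {c} A.
Arguments prod {c} _ _.
Arguments pr1 {c A B}.
Arguments pr2 {c A B}.
Arguments pair {c X A B} _ _.

Definition pmap (C : CCat) (A B A' B' : ob C) (f : hom C A A') (g : hom C B B')
  : hom C (prod A B) (prod A' B') := pair (comp f pr1) (comp g pr2).

Definition is_weak_eval (C : CCat) (W A B : ob C) (ev : hom C (prod W A) B) : Prop :=
  forall (X : ob C) (f : hom C (prod X A) B),
    exists g : hom C X W, comp ev (pmap g (idm A)) = f.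

Definition weakly_cc (C : CCat) : Prop :=
  forall A B : ob C, exists (W : ob C) (ev : hom C (prod W A) B), is_weak_eval ev.

Record PNNO (C : CCat) := {
  nat_ob : ob C;
  zero : hom C term nat_ob;
  succ : hom C nat_ob nat_ob;
  pnno_rec : forall (A X : ob C) (a : hom C A X) (h : hom C X X),
      exists! r : hom C (prod A nat_ob) X,
        comp r (pair (idm A) (comp zero (bang A))) = a /\
        comp r (pmap (idm A) succ) = comp h r
}.

(* Doctrines P : C^op -> InfSL.  Each fibre is an inf-semilattice,     *)
(* presented as a preorder with top and binary meets (the poset is the *)
(* quotient by mutual entailment); reindexing is functorial up to that *)
(* equivalence and preserves top and meets.                            *)
Record Doctrine (C : CCat) := {
  P : ob C -> Type;
  le : forall A, P A -> P A -> Prop;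
  le_refl : forall A (a : P A), le a a;
  le_trans : forall A (a b c : P A), le a b -> le b c -> le a c;
  re : forall A B : ob C, hom C A B -> P B -> P A;
  re_mono : forall A B (f : hom C A B) (a b : P B), le a b -> le (re f a) (re f b);
  re_id1 : forall A (a : P A), le (re (idm A) a) a;
  re_id2 : forall A (a : P A), le a (re (idm A) a);
  re_comp1 : forall A B D (f : hom C A B) (g : hom C B D) (a : P D),
      le (re (comp g f) a) (re f (re g a));
  re_comp2 : forall A B D (f : hom C A B) (g : hom C B D) (a : P D),
      le (re f (re g a)) (re (comp g f) a);
  top : forall A, P A;
  meet : forall A, P A -> P A -> P A;
  top_max : forall A (a : P A), le a (top A);
  meet_l : forall A (a b : P A), le (meet a b) a;
  meet_r : forall A (a b : P A), le (meet a b) b;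
  meet_glb : forall A (a b c : P A), le c a -> le c b -> le c (meet a b);
  re_top : forall A B (f : hom C A B), le (top A) (re f (top B));
  re_meet : forall A B (f : hom C A B) (a b : P B),
      le (meet (re f a) (re f b)) (re f (meet a b))
}.

Arguments P {C} d A.
Arguments le {C d A} _ _.
Arguments re {C d A B} _ _.
Arguments top {C d} A.
Arguments meet {C d A} _ _.

Definition eqv (C : CCat) (D : Doctrine C) (A : ob C) (a b : P D A) : Prop :=
  le a b /\ le b a.

Record HeytingQuant (C : CCat) (D : Doctrine C) := {
  bot : forall A, P D A;
  join : forall A, P D A -> P D A -> P D A;
  imp : forall A, P D A -> P D A -> P D A;
  bot_min : forall A (a : P D A), le (bot A) a;
  join_l : forall A (a b : P D A), le a (join a b);
  join_r : forall A (a b : P D A), le b (join a b);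
  join_lub : forall A (a b c : P D A), le a c -> le b c -> le (join a b) c;
  imp_adj : forall A (a b c : P D A), le (meet c a) b <-> le c (imp a b);
  re_bot : forall A B (f : hom C A B), eqv (re f (bot B)) (bot A);
  re_join : forall A B (f : hom C A B) (a b : P D B),
      eqv (re f (join a b)) (join (re f a) (re f b));
  re_imp : forall A B (f : hom C A B) (a b : P D B),
      eqv (re f (imp a b)) (imp (re f a) (re f b));
  ex1 : forall X A : ob C, P D (prod X A) -> P D X;
  all1 : forall X A : ob C, P D (prod X A) -> P D X;
  ex1_adj : forall X A (a : P D (prod X A)) (b : P D X),
      le (ex1 a) b <-> le a (re pr1 b);
  all1_adj : forall X A (a : P D (prod X A)) (b : P D X),
      le b (all1 a) <-> le (re pr1 b) a;
  ex1_BC : forall Y X A (f : hom C Y X) (a : P D (prod X A)),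
      eqv (ex1 (re (pmap f (idm A)) a)) (re f (ex1 a));
  all1_BC : forall Y X A (f : hom C Y X) (a : P D (prod X A)),
      eqv (all1 (re (pmap f (idm A)) a)) (re f (all1 a));
  ex2 : forall X A : ob C, P D (prod X A) -> P D A;
  all2 : forall X A : ob C, P D (prod X A) -> P D A;
  ex2_adj : forall X A (a : P D (prod X A)) (b : P D A),
      le (ex2 a) b <-> le a (re pr2 b);
  all2_adj : forall X A (a : P D (prod X A)) (b : P D A),
      le b (all2 a) <-> le (re pr2 b) a;
  ex2_BC : forall X Y A (g : hom C Y A) (a : P D (prod X A)),
      eqv (ex2 (re (pmap (idm X) g) a)) (re g (ex2 a));
  all2_BC : forall X Y A (g : hom C Y A) (a : P D (prod X A)),
      eqv (all2 (re (pmap (idm X) g) a)) (re g (all2 a))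
}.

Record Elementary (C : CCat) (D : Doctrine C) := {
  delta : forall A : ob C, P D (prod A A);
  delta_adj : forall (X A : ob C) (a : P D (prod X A)) (b : P D (prod (prod X A) A)),
      le (meet (re pr1 a) (re (pair (comp pr2 pr1) pr2) (delta A))) b
      <-> le a (re (pair (idm (prod X A)) pr2) b)
}.
Arguments delta {C D} e A.

(* Weak hyperdoctrine = elementary doctrine over a weakly cartesian     *)
(* closed base with Heyting fibres/reindexing and quantifiers (BC).    *)
Definition weak_hyperdoctrine (C : CCat) (D : Doctrine C)
  (H : HeytingQuant D) (E : Elementary D) : Prop := weakly_cc C.

Definition nno_induction (C : CCat) (D : Doctrine C) (N : PNNO C) : Prop :=
  forall (A : ob C) (phi : P D (prod A (nat_ob N))),
    le (top A) (re (pair (idm A) (comp (zero N) (bang A))) phi) ->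
    le phi (re (pmap (idm A) (succ N)) phi) ->
    le (top _) phi.

Definition arithmetic (C : CCat) (D : Doctrine C) (H : HeytingQuant D)
  (E : Elementary D) (N : PNNO C) : Prop :=
  weak_hyperdoctrine H E /\ nno_induction D N.

Definition comprehensive_diagonals (C : CCat) (D : Doctrine C) (E : Elementary D) : Prop :=
  forall (X Y : ob C) (f g : hom C X Y), le (top X) (re (pair f g) (delta E Y)) -> f = g.

(* A "raw" doctrine: the bare data needed to state the Axiom of Choice, *)
(* with predicates selecting the legitimate objects / arrows / elements *)
(* and an equivalence of arrows (used for the quotient completion, whose *)
(* arrows are equivalence classes).                                     *)
Record RawDoc := {
  rOb : Type;
  okOb : rOb -> Prop;
  rHom : rOb -> rOb -> Type;
  okHom : forall A B, rHom A B -> Prop;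
  heq : forall A B, rHom A B -> rHom A B -> Prop;
  rcomp : forall A B D, rHom B D -> rHom A B -> rHom A D;
  ridm : forall A, rHom A A;
  rone : rOb;
  rprod : rOb -> rOb -> rOb;
  rpr1 : forall A B, rHom (rprod A B) A;
  rpr2 : forall A B, rHom (rprod A B) B;
  rpair : forall X A B, rHom X A -> rHom X B -> rHom X (rprod A B);
  rP : rOb -> Type;
  okP : forall A, rP A -> Prop;
  rle : forall A, rP A -> rP A -> Prop;
  rre : forall A B, rHom A B -> rP B -> rP A
}.
Arguments okHom {r A B} _.
Arguments heq {r A B} _ _.
Arguments rcomp {r A B D} _ _.
Arguments ridm {r} A.
Arguments rone {r}.
Arguments rprod {r} _ _.
Arguments rpr1 {r A B}.
Arguments rpr2 {r A B}.
Arguments rpair {r X A B} _ _.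
Arguments okP {r A} _.
Arguments rle {r A} _ _.
Arguments rre {r A B} _ _.

Definition rpmap (R : RawDoc) (A B A' B' : rOb R) (f : rHom A A') (g : rHom B B')
  : rHom (rprod A B) (rprod A' B') := rpair (rcomp f rpr1) (rcomp g rpr2).

Definition r_weak_eval (R : RawDoc) (W A B : rOb R) (ev : rHom (rprod W A) B) : Prop :=
  forall X : rOb R, okOb X -> forall f : rHom (rprod X A) B, okHom f ->
    exists g : rHom X W, okHom g /\ heq (rcomp ev (rpmap g (ridm A))) f.

Definition is_ex1 (R : RawDoc) (X Y : rOb R) (ex : rP (rprod X Y) -> rP X) : Prop :=
  (forall a, okP a -> okP (ex a)) /\
  forall a b, okP a -> okP b -> (rle (ex a) b <-> rle a (rre rpr1 b)).

Definition is_all1 (R : RawDoc) (X Y : rOb R) (al : rP (rprod X Y) -> rP X) : Prop :=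
  (forall a, okP a -> okP (al a)) /\
  forall a b, okP a -> okP b -> (rle b (al a) <-> rle (rre rpr1 b) a).

(* Axiom of Choice on A (in the empty context, i.e. in the fibre over 1):
     ∀a.∃b.R(a,b) ⊢ ∃f:W.∀a.R(a, ev(f,a))
   for every B, R ∈ P(A×B) and weak evaluation ev : W×A -> B.
   The outer quantifiers ∀a and ∃f are taken along pr1 : 1×A -> 1 and
   pr1 : 1×W -> 1, after reindexing along pr2 : 1×A -> A, pr2 : 1×W -> W. *)
Definition AC_on (R : RawDoc) (A : rOb R) : Prop :=
  forall (B : rOb R), okOb B ->
  forall (Rel : rP (rprod A B)), okP Rel ->
  forall (W : rOb R) (ev : rHom (rprod W A) B), okOb W -> okHom ev -> r_weak_eval ev ->
  forall (exAB : rP (rprod A B) -> rP A) (allOA : rP (rprod rone A) -> rP rone)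
         (allWA : rP (rprod W A) -> rP W) (exOW : rP (rprod rone W) -> rP rone),
    is_ex1 exAB -> is_all1 allOA -> is_all1 allWA -> is_ex1 exOW ->
    rle (allOA (rre rpr2 (exAB Rel)))
        (exOW (rre rpr2 (allWA (rre (rpair rpr2 ev) Rel)))).

Definition rawP (C : CCat) (D : Doctrine C) : RawDoc := {|
  rOb := ob C; okOb := fun _ => True;
  rHom := hom C; okHom := fun _ _ _ => True;
  heq := fun _ _ f g => f = g;
  rcomp := fun _ _ _ g f => comp g f;
  ridm := fun A => idm A;
  rone := term;
  rprod := fun A B => prod A B;
  rpr1 := fun _ _ => pr1; rpr2 := fun _ _ => pr2;
  rpair := fun _ _ _ f g => pair f g;
  rP := P D; okP := fun _ _ => True;
  rle := fun _ a b => le a b;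
  rre := fun _ _ f a => re f a |}.

Definition is_Peqrel (C : CCat) (D : Doctrine C) (A : ob C) (rho : P D (prod A A)) : Prop :=
  le (top A) (re (pair (idm A) (idm A)) rho) /\
  le rho (re (pair pr2 pr1) rho) /\
  le (meet (re pr1 rho) (re (pair (comp pr2 pr1) pr2) rho))
     (re (pair (comp pr1 pr1) pr2) rho).

Definition prod_rel (C : CCat) (D : Doctrine C) (A B : ob C)
  (rho : P D (prod A A)) (sigma : P D (prod B B)) : P D (prod (prod A B) (prod A B)) :=
  meet (re (pair (comp pr1 pr1) (comp pr1 pr2)) rho)
       (re (pair (comp pr2 pr1) (comp pr2 pr2)) sigma).

Definition QOb (C : CCat) (D : Doctrine C) := { A : ob C & P D (prod A A) }.

(* Objects of Q_P: (A, ρ) with ρ a P-equivalence relation.  Arrows: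
   arrows f of C with ρ ⊢ σ(f×f), identified when ρ ⊢ σ(f×g).
   Fibres: P̄(A,ρ) = { α ∈ P(A) | α(a) ∧ ρ(a,a') ⊢ α(a') }. *)
Definition rawPbar (C : CCat) (D : Doctrine C) (E : Elementary D) : RawDoc := {|
  rOb := QOb D;
  okOb := fun X => is_Peqrel (projT2 X);
  rHom := fun X Y => hom C (projT1 X) (projT1 Y);
  okHom := fun X Y f => le (projT2 X) (re (pmap f f) (projT2 Y));
  heq := fun X Y f g => le (projT2 X) (re (pmap f g) (projT2 Y));
  rcomp := fun _ _ _ g f => comp g f;
  ridm := fun X => idm (projT1 X);
  rone := existT _ term (delta E term);
  rprod := fun X Y => existT _ (prod (projT1 X) (projT1 Y)) (prod_rel (projT2 X) (projT2 Y));
  rpr1 := fun _ _ => pr1; rpr2 := fun _ _ => pr2;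
  rpair := fun _ _ _ f g => pair f g;
  rP := fun X => P D (projT1 X);
  okP := fun X a => le (meet (re pr1 a) (projT2 X)) (re pr2 a);
  rle := fun _ a b => le a b;
  rre := fun _ _ f a => re f a |}.

(* (AC_N) for P, and for P̄ (natural number object (N, δ_N) of Q_P). *)
Definition AC_N (C : CCat) (D : Doctrine C) (N : PNNO C) : Prop :=
  AC_on (R := rawP D) (nat_ob N).

Definition AC_N_bar (C : CCat) (D : Doctrine C) (E : Elementary D) (N : PNNO C) : Prop :=
  AC_on (R := rawPbar E) (existT _ (nat_ob N) (delta E (nat_ob N))).

(* Main.v *)
Require Import Defs.
From Stdlib Require Import Setoid Morphisms RelationClasses.
Set Implicit Arguments.
Unset Strict Implicit.

Lemma comp_pair (C : CCat) (X Y A B : ob C) (f : hom C Y A) (g : hom C Y B) (h : hom C X Y) :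
  comp (pair f g) h = pair (comp f h) (comp g h).
Proof.
  rewrite (pair_uniq (comp (pair f g) h)).
  rewrite !comp_assoc, pair_pr1, pair_pr2. reflexivity.
Qed.

Lemma pr1_pair' (C : CCat) (X Y A B : ob C) (f : hom C Y A) (g : hom C Y B) (h : hom C X Y) :
  comp pr1 (comp (pair f g) h) = comp f h.
Proof. rewrite comp_assoc, pair_pr1; reflexivity. Qed.
Lemma pr2_pair' (C : CCat) (X Y A B : ob C) (f : hom C Y A) (g : hom C Y B) (h : hom C X Y) :
  comp pr2 (comp (pair f g) h) = comp g h.
Proof. rewrite comp_assoc, pair_pr2; reflexivity. Qed.
Lemma pair_eta (C : CCat) (X A B : ob C) (h : hom C X (prod A B)) :
  pair (comp pr1 h) (comp pr2 h) = h.
Proof. symmetry; apply pair_uniq. Qed.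
Lemma pair_id (C : CCat) (A B : ob C) : pair (@pr1 C A B) pr2 = idm (prod A B).
Proof. rewrite (pair_uniq (idm _)), !comp_idr. reflexivity. Qed.
Lemma bang_comp (C : CCat) (X Y : ob C) (f : hom C X Y) : comp (bang Y) f = bang X.
Proof. apply bang_uniq. Qed.

Ltac hsimp := unfold pmap; repeat progress (rewrite ?comp_pair, ?pair_pr1, ?pair_pr2, ?pr1_pair', ?pr2_pair',
   ?comp_idl, ?comp_idr, ?pair_id, ?pair_eta, ?bang_comp, <- ?comp_assoc).

Lemma t1 (C : CCat) (A B X: ob C) (f : hom C X A) (g : hom C X B) (h: hom C A A):
  comp (pmap h (idm B)) (pair f g) = pair (comp h f) g.
Proof. hsimp. reflexivity. Qed.
#[global] Instance le_pre (C : CCat) (D : Doctrine C) (A : ob C) : PreOrder (@le C D A).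
Proof. split; [intro; apply le_refl | intros ???; apply le_trans]. Qed.
#[global] Instance eqv_equiv (C : CCat) (D : Doctrine C) (A : ob C) : Equivalence (@eqv C D A).
Proof. split; unfold eqv.
  - intro; split; apply le_refl.
  - intros ?? []; split; auto.
  - intros ??? [] []; split; eapply le_trans; eauto. Qed.
#[global] Instance le_proper (C : CCat) (D : Doctrine C) (A : ob C) :
  Proper (@eqv C D A ==> @eqv C D A ==> iff) (@le C D A).
Proof. intros ?? [] ?? []; split; intro; repeat (eapply le_trans; eauto). Qed.
#[global] Instance re_proper (C : CCat) (D : Doctrine C) (A B : ob C) (f : hom C A B) :
  Proper (@eqv C D B ==> @eqv C D A) (re f).
Proof. intros ?? []; split; apply re_mono; auto. Qed.
#[global] Instance re_proper_le (C : CCat) (D : Doctrine C) (A B : ob C) (f : hom C A B) :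
  Proper (@le C D B ==> @le C D A) (re f).
Proof. intros ???; apply re_mono; auto. Qed.
Lemma meet_mono (C : CCat) (D : Doctrine C) (A : ob C) (a a' b b' : P D A) :
  le a a' -> le b b' -> le (meet a b) (meet a' b').
Proof. intros; apply meet_glb; [eapply le_trans; [apply meet_l|auto] | eapply le_trans; [apply meet_r|auto]]. Qed.
#[global] Instance meet_proper (C : CCat) (D : Doctrine C) (A : ob C) :
  Proper (@eqv C D A ==> @eqv C D A ==> @eqv C D A) meet.
Proof. intros ?? [] ?? []; split; apply meet_mono; auto. Qed.
#[global] Instance meet_proper_le (C : CCat) (D : Doctrine C) (A : ob C) :
  Proper (@le C D A ==> @le C D A ==> @le C D A) meet.
Proof. intros ?????; apply meet_mono; auto. Qed.

Lemma re_comp (C : CCat) (D : Doctrine C) (A B E : ob C) (f : hom C A B) (g : hom C B E) (a : P D E) :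
  eqv (re f (re g a)) (re (comp g f) a).
Proof. split; [apply re_comp2 | apply re_comp1]. Qed.
Lemma re_ceq (C : CCat) (D : Doctrine C) (A B E : ob C) (f : hom C A B) (g : hom C B E) (h : hom C A E) (a : P D E) :
  comp g f = h -> eqv (re f (re g a)) (re h a).
Proof. intros <-; apply re_comp. Qed.
Lemma re_idm (C : CCat) (D : Doctrine C) (A : ob C) (a : P D A) : eqv (re (idm A) a) a.
Proof. split; [apply re_id1 | apply re_id2]. Qed.
Lemma re_meetE (C : CCat) (D : Doctrine C) (A B : ob C) (f : hom C A B) (a b : P D B) :
  eqv (re f (meet a b)) (meet (re f a) (re f b)).
Proof. split; [apply meet_glb; apply re_mono; [apply meet_l|apply meet_r] | apply re_meet]. Qed.
Lemma re_topE (C : CCat) (D : Doctrine C) (A B : ob C) (f : hom C A B) :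
  eqv (re f (@top C D B)) (@top C D A).
Proof. split; [apply top_max | apply re_top]. Qed.
Lemma le_top_re (C : CCat) (D : Doctrine C) (A B : ob C) (f : hom C A B) (b : P D B) :
  le (top B) b -> le (top A) (re f b).
Proof. intro h. rewrite <- (re_topE D f). apply re_mono, h. Qed.
Lemma meet_top_l (C : CCat) (D : Doctrine C) (A : ob C) (a b : P D A) :
  le (top A) a -> le b (meet a b).
Proof. intro; apply meet_glb; [eapply le_trans; [apply top_max|auto] | apply le_refl]. Qed.
Ltac norm := repeat (rewrite ?re_comp, ?re_meetE); hsimp; rewrite ?re_idm.

Lemma dsubst (C : CCat) (D : Doctrine C) (E : Elementary D) (G A : ob C) (a : P D (prod G A)) :
  le (meet (re pr1 a) (re (pair (comp pr2 pr1) pr2) (delta E A))) (re (pair (comp pr1 pr1) pr2) a).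
Proof. apply (delta_adj E). norm. reflexivity. Qed.

Lemma drefl (C : CCat) (D : Doctrine C) (E : Elementary D) (A : ob C) :
  le (top A) (re (pair (idm A) (idm A)) (delta E A)).
Proof.
  pose proof (proj1 (delta_adj E (X:=term) (A:=A) (top _)
     (meet (re pr1 (top _)) (re (pair (comp pr2 pr1) pr2) (delta E A)))) (le_refl _)) as h.
  pose proof (le_trans h (re_mono _ (meet_r _ _))) as h2.
  apply (le_trans (le_top_re (pair (bang A) (idm A)) h2)). norm. reflexivity.
Qed.
Lemma peq_refl_t (C : CCat) (D : Doctrine C) (A : ob C) (rho : P D (prod A A)) (Hr : is_Peqrel rho)
  (X : ob C) (a : hom C X A) : le (top X) (re (pair a a) rho).
Proof. destruct Hr as [r _]. apply le_trans with (re a (re (pair (idm A) (idm A)) rho)).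
  - apply le_top_re, r.
  - norm. reflexivity. Qed.
Lemma peq_sym_t (C : CCat) (D : Doctrine C) (A : ob C) (rho : P D (prod A A)) (Hr : is_Peqrel rho)
  (X : ob C) (a b : hom C X A) : le (re (pair a b) rho) (re (pair b a) rho).
Proof. destruct Hr as [_ [s _]]. eapply le_trans; [apply re_mono, s|]. norm. reflexivity. Qed.
Lemma peq_trans_t (C : CCat) (D : Doctrine C) (A : ob C) (rho : P D (prod A A)) (Hr : is_Peqrel rho)
  (X : ob C) (a b c : hom C X A) :
  le (meet (re (pair a b) rho) (re (pair b c) rho)) (re (pair a c) rho).
Proof. destruct Hr as [_ [_ t]].
  apply le_trans with (re (pair (pair a b) c) (meet (re pr1 rho) (re (pair (comp pr2 pr1) pr2) rho))).
  - norm. reflexivity.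
  - eapply le_trans; [apply re_mono, t|]. norm. reflexivity. Qed.

Lemma dleast (C : CCat) (D : Doctrine C) (E : Elementary D) (A : ob C) (rho : P D (prod A A)) :
  le (top A) (re (pair (idm A) (idm A)) rho) -> le (delta E A) rho.
Proof. intro r.
  apply le_trans with (re (pair (pair pr1 pr1) pr2) (meet (re pr1 rho) (re (pair (comp pr2 pr1) pr2) (delta E A)))).
  - norm. apply meet_glb; [|reflexivity].
    eapply le_trans; [apply top_max|]. apply le_trans with (re pr1 (re (pair (idm A) (idm A)) rho)).
    + apply le_top_re, r.
    + norm. reflexivity.
  - eapply le_trans; [apply re_mono, dsubst|]. norm. reflexivity. Qed.

Lemma delta_peq (C : CCat) (D : Doctrine C) (E : Elementary D) (A : ob C) : is_Peqrel (delta E A).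
Proof. split; [apply drefl|split; [|apply dsubst]].
  apply dleast. norm. apply drefl. Qed.

Lemma dsubst_t (C : CCat) (D : Doctrine C) (E : Elementary D) (G A X : ob C) (al : P D (prod G A))
  (g : hom C X G) (a b : hom C X A) :
  le (meet (re (pair g a) al) (re (pair a b) (delta E A))) (re (pair g b) al).
Proof.
  apply le_trans with (re (pair (pair g a) b) (meet (re pr1 al) (re (pair (comp pr2 pr1) pr2) (delta E A)))).
  - norm. reflexivity.
  - eapply le_trans; [apply re_mono, dsubst|]. norm. reflexivity. Qed.

Lemma dresp (C : CCat) (D : Doctrine C) (E : Elementary D) (A : ob C) (al : P D A) :
  le (meet (re pr1 al) (delta E A)) (re pr2 al).
Proof.
  pose proof (dsubst_t E (re pr2 al) (bang (prod A A)) pr1 pr2) as h.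
  revert h. norm. auto. Qed.

Lemma dcong_t (C : CCat) (D : Doctrine C) (E : Elementary D) (G A B X : ob C) (f : hom C (prod G A) B)
  (c : hom C X G) (a b : hom C X A) :
  le (re (pair a b) (delta E A)) (re (pair (comp f (pair c a)) (comp f (pair c b))) (delta E B)).
Proof.
  set (al := re (pair (comp f (pair (comp c pr1) (comp a pr1))) (comp f (pair (comp c pr1) pr2))) (delta E B)).
  apply le_trans with (meet (re (pair (idm X) a) al) (re (pair a b) (delta E A))).
  - apply meet_top_l. unfold al. norm. apply (peq_refl_t (delta_peq E B)).
  - eapply le_trans; [apply dsubst_t|]. unfold al. norm. reflexivity. Qed.

Lemma prod_delta (C : CCat) (D : Doctrine C) (E : Elementary D) (A B : ob C) :
  le (prod_rel (delta E A) (delta E B)) (delta E (prod A B)).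
Proof. unfold prod_rel.
  eapply le_trans; [apply meet_mono; [apply (dcong_t E (pair pr2 pr1) (comp pr2 pr1)) | apply (dcong_t E (idm _) (comp pr1 pr2))]|].
  norm. eapply le_trans; [apply (peq_trans_t (delta_peq E _))|]. norm. reflexivity. Qed.
Definition okPb (C : CCat) (D : Doctrine C) (A : ob C) (rho : P D (prod A A)) (a : P D A) : Prop :=
  le (meet (re pr1 a) rho) (re pr2 a).

Lemma okP_re (C : CCat) (D : Doctrine C) (X Y : ob C) (rX : P D (prod X X)) (rY : P D (prod Y Y))
  (h : hom C Y X) (al : P D X) :
  le rY (re (pmap h h) rX) -> okPb rX al -> okPb rY (re h al).
Proof. unfold okPb, pmap. intros hr ha.
  apply le_trans with (re (pair (comp h pr1) (comp h pr2)) (meet (re pr1 al) rX)).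
  - rewrite re_meetE. apply meet_mono; [norm; reflexivity | exact hr].
  - eapply le_trans; [apply re_mono, ha|]. norm. reflexivity. Qed.

Lemma all1_counit (C : CCat) (D : Doctrine C) (H : HeytingQuant D) (X A : ob C) (a : P D (prod X A)) :
  le (re pr1 (all1 H a)) a.
Proof. apply (all1_adj H). reflexivity. Qed.
Lemma ex1_unit (C : CCat) (D : Doctrine C) (H : HeytingQuant D) (X A : ob C) (a : P D (prod X A)) :
  le a (re pr1 (ex1 H a)).
Proof. apply (ex1_adj H). reflexivity. Qed.

Lemma all1_cu2 (C : CCat) (D : Doctrine C) (H : HeytingQuant D) (X A Y : ob C) (a : P D (prod X A))
  (k : hom C Y X) (n : hom C Y A) : le (re k (all1 H a)) (re (pair k n) a).
Proof. apply le_trans with (re (pair k n) (re pr1 (all1 H a))).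
  - norm. reflexivity.
  - apply re_mono. apply (all1_adj H). reflexivity. Qed.

Lemma okP_all1 (C : CCat) (D : Doctrine C) (H : HeytingQuant D) (W Nn : ob C) (om : P D (prod W W))
  (rN : P D (prod Nn Nn)) (hr : le (top Nn) (re (pair (idm Nn) (idm Nn)) rN)) (a : P D (prod W Nn)) :
  okPb (prod_rel om rN) a -> okPb om (all1 H a).
Proof. unfold okPb. intro ha.
  rewrite <- (all1_BC H (pr2 (A:=W) (B:=W)) a). apply all1_adj.
  apply le_trans with (re (pair (pair (comp pr1 pr1) pr2) (pair (comp pr2 pr1) pr2)) (meet (re pr1 a) (prod_rel om rN))).
  - unfold prod_rel. norm. apply meet_glb.
    + eapply le_trans; [apply meet_l| apply all1_cu2].
    + apply meet_glb; [apply meet_r|]. eapply le_trans; [apply top_max|].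
      apply le_trans with (re pr2 (re (pair (idm Nn) (idm Nn)) rN)); [apply le_top_re, hr| norm; reflexivity].
  - eapply le_trans; [apply re_mono, ha|]. norm. reflexivity.
Qed.

Lemma all1_unique (C : CCat) (D : Doctrine C) (H : HeytingQuant D) (X A : ob C)
  (al : P D (prod X A) -> P D X) (adj : forall a b, le b (al a) <-> le (re pr1 b) a) (a : P D (prod X A)) :
  eqv (al a) (all1 H a).
Proof. split.
  - apply all1_adj. apply adj. reflexivity.
  - apply adj. apply (all1_adj H). reflexivity. Qed.

Lemma dir2 (C : CCat) (D : Doctrine C) (H : HeytingQuant D) (E : Elementary D) (N : PNNO C) :
  AC_N_bar E N -> AC_N D N.
Proof.
  intro HAC. unfold AC_N, AC_on. intros B _ Rel _ W ev _ _ Hwe exAB allOA allWA exOW HexAB HallOA HallWA HexOW.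
  cbn in *.
  set (th := re (pair (comp ev (pair (comp pr1 pr1) pr2)) (comp ev (pair (comp pr2 pr1) pr2))) (delta E B)).
  set (rW := all1 H th).
  assert (peqW : is_Peqrel rW).
  { split; [|split].
    - unfold rW. rewrite <- (all1_BC H (pair (idm W) (idm W)) th). apply all1_adj.
      unfold th. norm. eapply le_trans; [apply top_max|]. apply (peq_refl_t (delta_peq E B)).
    - unfold rW. rewrite <- (all1_BC H (pair pr2 pr1) th). apply all1_adj.
      eapply le_trans; [apply all1_counit|]. unfold th. norm. apply (peq_sym_t (delta_peq E B)).
    - unfold rW. rewrite <- (all1_BC H (pair (comp pr1 pr1) pr2) th). apply all1_adj.
      norm. eapply le_trans; [apply meet_mono; apply all1_cu2 with (n := pr2)|]. unfold th. norm.
      apply (peq_trans_t (delta_peq E B)). }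
  assert (okev : le (prod_rel rW (delta E (nat_ob N))) (re (pmap ev ev) (delta E B))).
  { unfold prod_rel.
    eapply le_trans; [apply meet_mono; [apply all1_cu2 with (n := comp pr2 pr1) | apply (dcong_t E ev (comp pr1 pr2) (comp pr2 pr1) (comp pr2 pr2))]|].
    unfold th. norm. eapply le_trans; [apply (peq_trans_t (delta_peq E B))|]. norm. reflexivity. }
  assert (wev : r_weak_eval (R := rawPbar E) (W := existT _ W rW)
            (A := existT _ (nat_ob N) (delta E (nat_ob N))) (B := existT _ B (delta E B)) ev).
  { intros [X rho] Hrho f Hf. cbn in *.
    destruct (Hwe X I f I) as [g [_ Hg]]. cbn in Hg. subst f.
    exists g. split; [|exact Hf].
    unfold rW. rewrite <- (all1_BC H (pmap g g) th). apply all1_adj.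
    apply le_trans with (re (pair (pair (comp pr1 pr1) pr2) (pair (comp pr2 pr1) pr2)) (prod_rel rho (delta E (nat_ob N)))).
    - unfold prod_rel. norm. apply meet_glb; [reflexivity|].
      eapply le_trans; [apply top_max | apply (peq_refl_t (delta_peq E _))].
    - eapply le_trans; [apply re_mono, Hf|]. unfold th. norm. reflexivity. }
  assert (okRel : le (meet (re pr1 Rel) (prod_rel (delta E (nat_ob N)) (delta E B))) (re pr2 Rel)).
  { eapply le_trans; [apply meet_mono; [reflexivity| apply prod_delta]|]. apply dresp. }
  refine (HAC (existT _ B (delta E B)) (delta_peq E B) Rel okRel (existT _ W rW) ev peqW okev wev
            exAB allOA allWA exOW _ _ _ _).
  - split; [intros; apply dresp | intros; apply (proj2 HexAB); exact I].
  - split; [intros; apply dresp | intros; apply (proj2 HallOA); exact I].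
  - split; [|intros; apply (proj2 HallWA); exact I].
    intros a ha. cbn in *.
    assert (e := all1_unique H (fun a b => proj2 HallWA a b I I) a).
    unfold okPb in *. change (le (meet (re pr1 (allWA a)) rW) (re pr2 (allWA a))).
    rewrite e. apply (okP_all1 H (rN := delta E (nat_ob N))); [apply drefl | exact ha].
  - split; [intros; apply dresp | intros; apply (proj2 HexOW); exact I].
Qed.
Lemma dir1 (C : CCat) (D : Doctrine C) (H : HeytingQuant D) (E : Elementary D) (N : PNNO C) :
  weakly_cc C -> AC_N D N -> AC_N_bar E N.
Proof.
  intros Hwcc HAC. unfold AC_N_bar, AC_on.
  intros [B sg] Hsg Rel HRel [W om] ev Hom Hev Hwe exAB allOA allWA exOW HexAB HallOA HallWA HexOW.
  cbn in *.
  destruct HexAB as [okAB adjAB], HallOA as [okOA adjOA], HallWA as [okWA adjWA], HexOW as [okOW adjOW].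
  cbn in *.
  destruct (Hwcc (nat_ob N) B) as [W' [ev' Hev']].
  set (Z := re (pair pr2 ev) Rel).
  assert (okZ : okPb (prod_rel om (delta E (nat_ob N))) Z).
  { apply (okP_re (rX := prod_rel (delta E (nat_ob N)) sg)); [|exact HRel].
    unfold prod_rel. norm. apply meet_glb; [apply meet_r|].
    eapply le_trans; [apply Hev|]. norm. reflexivity. }
  assert (okallZ : okPb om (all1 H Z)).
  { apply (okP_all1 H (rN := delta E (nat_ob N))); [apply drefl | exact okZ]. }
  assert (hZ : le (all1 H Z) (allWA Z)).
  { apply (adjWA Z (all1 H Z) okZ okallZ). apply all1_counit. }
  assert (okev' : le (prod_rel (delta E W') (delta E (nat_ob N))) (re (pmap ev' ev') sg)).
  { eapply le_trans; [apply prod_delta|]. apply dleast. norm. apply (peq_refl_t Hsg). }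
  destruct (Hwe (existT _ W' (delta E W')) (delta_peq E W') ev' okev') as [g [_ Hg]].
  change (hom C W' W) in g. cbn in Hg.
  assert (hs1 : le (top (prod W' (nat_ob N))) (re (pair ev' (comp ev (pmap g (idm (nat_ob N))))) sg)).
  { eapply le_trans; [|apply (peq_sym_t Hsg)].
    apply le_trans with (re (pair (idm _) (idm _)) (prod_rel (delta E W') (delta E (nat_ob N)))).
    - unfold prod_rel. norm. apply meet_glb; apply (peq_refl_t (delta_peq E _)).
    - eapply le_trans; [apply re_mono, Hg|]. norm. reflexivity. }
  assert (step1 : le (exAB Rel) (ex1 H Rel)).
  { apply (adjAB Rel (ex1 H Rel) HRel (dresp E _)). apply ex1_unit. }
  apply le_trans with (all1 H (re pr2 (ex1 H Rel))).
  { apply all1_adj.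
    assert (oka : okPb (prod_rel (delta E term) (delta E (nat_ob N))) (re pr2 (exAB Rel))).
    { apply (okP_re (rX := delta E (nat_ob N))); [unfold prod_rel, pmap; apply meet_r | apply okAB, HRel]. }
    eapply le_trans; [apply (adjOA _ _ oka (okOA _ oka)); reflexivity|]. apply re_mono, step1. }
  apply le_trans with (ex1 H (re pr2 (all1 H (re (pair pr2 ev') Rel)))).
  { assert (Hwe' : r_weak_eval (R := rawP D) ev').
    { intros X _ f _. destruct (Hev' X f) as [h Hh]. exists h. split; [exact I | exact Hh]. }
    apply (HAC B I Rel I W' ev' I I Hwe' (@ex1 C D H (nat_ob N) B) (@all1 C D H term (nat_ob N)) (@all1 C D H W' (nat_ob N)) (@ex1 C D H term W')).
    - split; [intros; exact I | intros; apply ex1_adj].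
    - split; [intros; exact I | intros; apply all1_adj].
    - split; [intros; exact I | intros; apply all1_adj].
    - split; [intros; exact I | intros; apply ex1_adj]. }
  apply ex1_adj.
  assert (oky : okPb (prod_rel (delta E term) om) (re pr2 (allWA Z))).
  { apply (okP_re (rX := om)); [unfold prod_rel, pmap; apply meet_r | apply okWA, okZ]. }
  set (R := exOW (re pr2 (allWA Z))).
  assert (unitOW : le (re pr2 (allWA Z)) (re pr1 R)).
  { apply (adjOW _ R oky (okOW _ oky)). reflexivity. }
  assert (stepD : le (all1 H (re (pair pr2 ev') Rel)) (re g (allWA Z))).
  { eapply le_trans; [|apply re_mono, hZ].
    rewrite <- (all1_BC H g Z). apply all1_adj. eapply le_trans; [apply all1_counit|].
    apply le_trans with (re (pair (pair pr2 ev') (pair pr2 (comp ev (pmap g (idm (nat_ob N))))))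
                           (meet (re pr1 Rel) (prod_rel (delta E (nat_ob N)) sg))).
    - unfold prod_rel. norm. apply meet_glb; [reflexivity|].
      eapply le_trans; [apply top_max|]. apply meet_glb; [apply (peq_refl_t (delta_peq E _))|].
      eapply le_trans; [apply hs1|]. norm. reflexivity.
    - eapply le_trans; [apply re_mono, HRel|]. unfold Z. norm. reflexivity. }
  apply le_trans with (re pr2 (re g (allWA Z))); [apply re_mono, stepD|].
  apply le_trans with (re (pmap (idm term) g) (re pr2 (allWA Z))); [norm; reflexivity|].
  eapply le_trans; [apply re_mono, unitOW|]. norm. reflexivity.
Qed.

Theorem corollary3p13 (C : CCat) (D : Doctrine C) (H : HeytingQuant D)
  (E : Elementary D) (N : PNNO C) :
  arithmetic H E N ->
  comprehensive_diagonals E ->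
  (AC_N D N <-> AC_N_bar E N).
Proof.
  intros [Hw _] _. split; [apply (dir1 H); exact Hw | apply (dir2 H)].
Qed.
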